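(* Let $G$, $k\ge 3$, the choice strings $c_{i,j}$ ($1\le i<j\le k$), the template string $t$, $L$ and $d$ be as in the binary construction described in the context. If $G$ has a clique of size $k$, then there is a string $s\in\{0,1\}^L$ such that every choice string $c_{i,j}$ has a substring $s_{i,j}$ of length $L$ with $d_H(s,s_{i,j})\le d$, and $d_H(s,t)\le d$.
   Context: Let $G=(V,E)$ be an undirected simple graph with $V=\{v_1,\dots,v_n\}$ and edge set $E=\{e_1,\dots,e_m\}$, and let $k\ge 3$ be an integer; put $N=\binom{k}{2}$ and $b=nk-2k+2$. All strings are over $\{0,1\}$. For $1\le p\le n$ let $\mathrm{number}(p)=0^{p-1}10^{n-p}$. Let $\mathrm{front\_tag}=(1^{3nk}0)^{nk}$ (length $(3nk+1)nk$). Order the pairs $(i,j)$, $1\le i<j\le k$, lexicographically and let $i'$ be the position of $(i,j)$ in this order. For an edge $e$ joining $v_r,v_s$ with $r<s$ let $\mathrm{encode}(i,j,e)=(0^n)^{i-1}\,\mathrm{number}(r)\,(0^n)^{j-i-1}\,\mathrm{number}(s)\,(0^n)^{k-j}$ (length $nk$; its $k$ consecutive length-$n$ pieces are called sections), $\mathrm{back\_tag}(i')=0^{(i'-1)b}1^{b}0^{(N-i')b}$, and $\mathrm{block}(i,j,e)=\mathrm{front\_tag}\,\mathrm{encode}(i,j,e)\,\mathrm{back\_tag}(i')$. The choice string is $c_{i,j}=\mathrm{block}(i,j,e_1)\mathrm{block}(i,j,e_2)\cdots\mathrm{block}(i,j,e_m)$. The template string is $t=\mathrm{front\_tag}\,1^{nk}\,0^{Nb}$.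 Set $L=(3nk+1)nk+nk+Nb$ and $d=nk-k$. $d_H$ denotes Hamming distance. *)

(* Defs.v *)
From mathcomp Require Import all_boot.
Set Implicit Arguments. Unset Strict Implicit. Unset Printing Implicit Defensive.

Definition simple_graph (n : nat) (E : seq (nat * nat)) : Prop :=
  uniq E /\ all (fun e => (0 < e.1) && (e.1 < e.2) && (e.2 <= n)) E.

Definition adjacent (E : seq (nat * nat)) (u v : nat) : bool :=
  ((u, v) \in E) || ((v, u) \in E).

Definition has_clique (n k : nat) (E : seq (nat * nat)) : Prop :=
  exists Q : seq nat, [/\ size Q = k, uniq Q,
    all (fun v => (0 < v) && (v <= n)) Q &
    forall u v, u \in Q -> v \in Q -> u != v -> adjacent E u v].

Section Construction.
Variables (n k : nat) (E : seq (nat * nat)).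

Definition NN : nat := 'C(k, 2).
Definition bb : nat := n * k - 2 * k + 2.

Definition number (p : nat) : seq bool :=
  nseq (p - 1) false ++ [:: true] ++ nseq (n - p) false.

Definition front_tag : seq bool :=
  flatten (nseq (n * k) (nseq (3 * n * k) true ++ [:: false])).

Definition pairs_lex : seq (nat * nat) :=
  [seq ij <- [seq (i, j) | i <- iota 1 k, j <- iota 1 k] | ij.1 < ij.2].

(* 1-based position i' of (i,j) in this order *)
Definition pair_pos (i j : nat) : nat := (index (i, j) pairs_lex).+1.

Definition zsec (c : nat) : seq bool := nseq (c * n) false.

Definition encode (i j : nat) (e : nat * nat) : seq bool :=
  zsec (i - 1) ++ number e.1 ++ zsec (j - i - 1) ++ number e.2 ++ zsec (k - j).

Definition back_tag (i' : nat) : seq bool :=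
  nseq ((i' - 1) * bb) false ++ nseq bb true ++ nseq ((NN - i') * bb) false.

Definition block (i j : nat) (e : nat * nat) : seq bool :=
  front_tag ++ encode i j e ++ back_tag (pair_pos i j).

Definition choice_string (i j : nat) : seq bool :=
  flatten [seq block i j e | e <- E].

Definition template : seq bool :=
  front_tag ++ nseq (n * k) true ++ nseq (NN * bb) false.

Definition LL : nat := (3 * n * k + 1) * (n * k) + n * k + NN * bb.
Definition dd : nat := n * k - k.

End Construction.

Definition dH (s t : seq bool) : nat := count (fun p => p.1 != p.2) (zip s t).

Definition substring (x : seq bool) (p l : nat) : seq bool := take l (drop p x).

(* Main.v *)
Require Import Defs.
From mathcomp Require Import all_boot zify.

Lemma dH_cat a b c d : size a = size c -> dH (a ++ b) (c ++ d) = dH a c + dH b d.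
Proof. by move=> h; rewrite /dH zip_cat // count_cat. Qed.

Lemma dH_refl a : dH a a = 0.
Proof. by elim: a => //= x a; rewrite /dH /= eqxx. Qed.

Lemma dH_false x : dH x (nseq (size x) false) = count id x.
Proof. by elim: x => //= b x; rewrite /dH /= => ->; case: b. Qed.

Lemma dH_false' x : dH (nseq (size x) false) x = count id x.
Proof. by elim: x => //= b x; rewrite /dH /= => ->; case: b. Qed.

Lemma dH_true x : dH x (nseq (size x) true) = size x - count id x.
Proof.
have := count_predC id x.
suff -> : dH x (nseq (size x) true) = count (predC id) x by lia.
by elim: x => //= b x; rewrite /dH /= => ->; case: b.
Qed.

Lemma size_number n v : 0 < v <= n -> size (Defs.number n v) = n.
Proof. move=> h; rewrite /number !size_cat !size_nseq /=; lia. Qed.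

Lemma count_number n v : count id (Defs.number n v) = 1.
Proof. by rewrite /number !count_cat !count_nseq /=; lia. Qed.

Lemma size_flat_const (T : Type) (S : eqType) (f : S -> seq T) B s :
  (forall x, x \in s -> size (f x) = B) -> size (flatten (map f s)) = size s * B.
Proof.
elim: s => //= x s IH h; rewrite size_cat h ?inE ?eqxx // IH //.
by move=> y hy; apply: h; rewrite inE hy orbT.
Qed.

Lemma drop_flat_const (T : Type) (S : eqType) (f : S -> seq T) B s m :
  (forall x, x \in s -> size (f x) = B) -> m <= size s ->
  drop (m * B) (flatten (map f s)) = flatten (map f (drop m s)).
Proof.
elim: s m => [|x s IH] [|m] //= h hm.
- by rewrite drop0.
- rewrite mulSn addnC -drop_drop drop_size_cat ?h ?inE ?eqxx // IH //.
  by move=> y hy; apply: h; rewrite inE hy orbT.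
Qed.

Lemma enc_props n X : all (fun v => (0 < v) && (v <= n)) X ->
  size (flatten (map (Defs.number n) X)) = size X * n /\
  count id (flatten (map (Defs.number n) X)) = size X.
Proof.
elim: X => //= x X IH /andP[hx hX]; have [h1 h2] := IH hX.
rewrite size_cat count_cat h1 h2 size_number // count_number; lia.
Qed.

Lemma sum_pairs k : size (pairs_lex k) = 'C(k, 2).
Proof.
rewrite /pairs_lex size_filter /= count_flatten -map_comp.
have hc : forall i, count (fun j => i < j) (iota 1 k) = k - i.
  move=> i; elim: k => // k IH; rewrite -[k.+1]addn1 iotaD count_cat IH /=; lia.
rewrite (eq_map (g := fun i => k - i)); last first.
  by move=> i /=; rewrite count_map -hc; apply: eq_count.
elim: k {hc} => // k IH.
rewrite /= binS bin1 subn1 /= -(add1n 1) iotaDl -map_comp.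
rewrite (eq_map (g := fun i => k - i)) ?IH; first by rewrite addnC.
by move=> i /=; rewrite add1n subSS.
Qed.

Lemma size_front n k : size (front_tag n k) = (3 * n * k + 1) * (n * k).
Proof.
have g : forall m (x : seq bool), size (flatten (nseq m x)) = m * size x.
  by move=> m x; elim: m => //= m IH; rewrite size_cat IH mulSn.
rewrite /front_tag g size_cat size_nseq /= addn1 mulnC.
by [].
Qed.

Lemma pair_pos_le k i j : 1 <= i -> i < j -> j <= k -> pair_pos k i j <= NN k.
Proof.
move=> hi hij hj; rewrite /pair_pos /NN -sum_pairs index_mem /pairs_lex mem_filter /=.
rewrite hij /=; apply/allpairsP; exists (i, j) => /=; split => //; rewrite mem_iota; lia.
Qed.

Lemma size_back n k i' : 1 <= i' <= NN k -> size (back_tag n k i') = NN k * bb n k.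
Proof.
move=> h; rewrite /back_tag !size_cat !size_nseq.
rewrite -mulSn -mulnDl; congr (_ * _); lia.
Qed.

Lemma count_back n k i' : count id (back_tag n k i') = bb n k.
Proof. rewrite /back_tag !count_cat !count_nseq /=; lia. Qed.

Lemma size_encode n k i j e : 1 <= i -> i < j -> j <= k ->
  0 < e.1 <= n -> 0 < e.2 <= n -> size (encode n k i j e) = k * n.
Proof.
move=> hi hij hj h1 h2; rewrite /encode /zsec !size_cat !size_nseq /=.
have -> : e.1 - 1 + (1 + (n - e.1)) = n by lia.
have -> : e.2 - 1 + (1 + (n - e.2)) = n by lia.
rewrite -mulSn -mulnDl -mulSn -mulnDl.
congr (_ * _); lia.
Qed.

Theorem proposition3 (n k : nat) (E : seq (nat * nat)) :
  simple_graph n E -> 3 <= k ->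
  has_clique n k E ->
  exists s : seq bool,
    [/\ size s = LL n k,
        (forall i j, 1 <= i -> i < j -> j <= k ->
           exists p, p + LL n k <= size (choice_string n k E i j) /\
             dH s (substring (choice_string n k E i j) p (LL n k)) <= dd n k) &
        dH s (template n k) <= dd n k].
Proof.
move=> [uE allE] hk [Q [szQ uQ allQ adjQ]].
set Q' := sort leq Q.
have szQ' : size Q' = k by rewrite size_sort.
have allQ' : all (fun v => (0 < v) && (v <= n)) Q' by rewrite all_sort.
have srt : sorted ltn Q'.
  by rewrite ltn_sorted_uniq_leq sort_uniq uQ sort_sorted //; exact: leq_total.
have hkn : k <= n.
  rewrite -szQ -(size_iota 1 n); apply: uniq_leq_size => // v hv.
  move/allP: allQ => /(_ v hv) /andP[h1 h2]; rewrite mem_iota; lia.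
set enc := flatten (map (Defs.number n) Q').
have [senc cenc] := @enc_props n _ allQ'.
rewrite -/enc szQ' in senc cenc.
exists (front_tag n k ++ enc ++ nseq (NN k * bb n k) false); split.
- rewrite !size_cat size_front senc size_nseq /LL mulnC; lia.
- move=> i j hi hij hj.
  set vi := nth 0 Q' (i - 1); set vj := nth 0 Q' (j - 1).
  have hvij : vi < vj.
    apply: (sorted_ltn_nth ltn_trans) => //; rewrite ?inE ?szQ' /=; lia.
  have viQ : vi \in Q by rewrite -(mem_sort leq) mem_nth // szQ'; lia.
  have vjQ : vj \in Q by rewrite -(mem_sort leq) mem_nth // szQ'; lia.
  have hE : (vi, vj) \in E.
    have := adjQ vi vj viQ vjQ; rewrite neq_ltn hvij => /(_ isT) /orP[] // h.
    move/allP: allE => /(_ _ h) /= /andP[/andP[_ h'] _]; lia.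
  have hvi : 0 < vi <= n by move/allP: allQ => /(_ vi viQ).
  have hvj : 0 < vj <= n by move/allP: allQ => /(_ vj vjQ).
  have hpp := @pair_pos_le k i j hi hij hj.
  have sblock : forall e, e \in E -> size (block n k i j e) = LL n k.
    move=> [a c] he; move/allP: allE => /(_ _ he) /andP[/andP[h1 h2] h3] /=.
    rewrite /= in h1 h2 h3.
    have h1' : 0 < a <= n by rewrite h1 (ltnW (leq_trans h2 h3)).
    have h2' : 0 < c <= n by rewrite h3 (leq_trans _ h2).
    rewrite /block size_cat size_cat size_front (@size_encode n k i j (a, c)) //.
    rewrite size_back; last by rewrite hpp andbT.
    by rewrite /LL addnA [k * n]mulnC.
  exists (index (vi, vj) E * LL n k); split.
    rewrite /choice_string (@size_flat_const _ _ _ _ _ sblock) -mulSnr leq_mul2r.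
    by rewrite index_mem hE orbT.
  rewrite /substring /choice_string drop_flat_const //; last first.
    by apply: ltnW; rewrite index_mem.
  rewrite (drop_nth (0, 0)) ?index_mem // nth_index //= take_size_cat ?sblock //.
  have eQ : Q' = take (i-1) Q' ++ vi :: (take (j-i-1) (drop i Q') ++ vj :: drop j Q').
    rewrite -{1}(cat_take_drop (i-1) Q'); congr (_ ++ _).
    rewrite (drop_nth 0) ?szQ'; last lia.
    have -> : (i-1).+1 = i by lia.
    congr (_ :: _).
    rewrite -{1}(cat_take_drop (j-i-1) (drop i Q')) drop_drop; congr (_ ++ _).
    have -> : j - i - 1 + i = j - 1 by lia.
    rewrite (drop_nth 0) ?szQ'; last lia.
    by have -> : (j-1).+1 = j by lia.
  have encX : forall X, {subset X <= Q'} ->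
      (size (flatten (map (Defs.number n) X)) = size X * n) /\
      (count id (flatten (map (Defs.number n) X)) = size X).
    move=> X hX; apply: enc_props; apply/allP => x hx; exact: (allP allQ' x (hX x hx)).
  have [sA1 cA1] := encX (take (i-1) Q') (fun x hx => mem_take hx).
  have [sA2 cA2] := encX (take (j-i-1) (drop i Q')) (fun x hx => mem_drop (mem_take hx)).
  have [sA3 cA3] := encX (drop j Q') (fun x hx => mem_drop hx).
  rewrite size_takel ?szQ' in sA1 cA1; last lia.
  rewrite size_takel ?size_drop ?szQ' in sA2 cA2; last lia.
  rewrite size_drop ?szQ' in sA3 cA3.
  set A1 := flatten (map (Defs.number n) (take (i-1) Q')) in sA1 cA1.
  set A2 := flatten (map (Defs.number n) (take (j-i-1) (drop i Q'))) in sA2 cA2.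
  set A3 := flatten (map (Defs.number n) (drop j Q')) in sA3 cA3.
  have d1 : dH A1 (nseq ((i-1)*n) false) = i-1 by rewrite -sA1 dH_false cA1.
  have d2 : dH A2 (nseq ((j-i-1)*n) false) = j-i-1 by rewrite -sA2 dH_false cA2.
  have d3 : dH A3 (nseq ((k-j)*n) false) = k-j by rewrite -sA3 dH_false cA3.
  have db : dH (nseq (NN k * bb n k) false) (back_tag n k (pair_pos k i j)) = bb n k.
    by rewrite -(@size_back n k (pair_pos k i j)) ?hpp ?andbT // dH_false' count_back.
  have snum : forall v, 0 < v <= n -> size (Defs.number n v) = size (nseq n false).
    by move=> v hv; rewrite size_number // size_nseq.
  rewrite /block /enc eQ map_cat flatten_cat !map_cons [flatten (_ :: _)]/=.
  rewrite map_cat flatten_cat map_cons [flatten (_ :: _)]/= -/A1 -/A2 -/A3.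
  rewrite /encode /zsec /=.
  have snvi := snum vi hvi; have snvj := snum vj hvj.
  set nvi := Defs.number n vi in snvi *; set nvj := Defs.number n vj in snvj *.
  clearbody nvi nvj.
  rewrite -!catA.
  rewrite dH_cat // dH_refl dH_cat ?sA1 ?size_nseq // d1.
  rewrite dH_cat ?snvi // dH_refl dH_cat ?sA2 ?size_nseq // d2.
  rewrite dH_cat ?snvj // dH_refl dH_cat ?sA3 ?size_nseq // d3 db.
  rewrite /bb /dd; nia.
- rewrite /template dH_cat // dH_cat ?senc ?size_nseq 1?mulnC // !dH_refl.
  rewrite -senc dH_true senc cenc /dd mulnC; lia.
Qed.
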